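(* Let $\mathcal{A}$ be a central and essential arrangement in $\mathbb{Q}^l$ as in the context, with $\lcm$-period $\rho_0$ and constant $q_0$. If $p$ is a prime with $p>q_0$ and $p$ coprime to $\rho_0$, then $\mathcal{A}$ and $\mathcal{A}_p$ are combinatorially equivalent.
   Context: $\mathcal{A}=\{H_1,\dots,H_n\}$: $n$ distinct linear hyperplanes in $\mathbb{Q}^l$ with $\bigcap H_i=\{0\}$, $H_i=\{\alpha_i=0\}$, $\alpha_i=\sum_{k=1}^lc_{ki}x_k$ with $c_{ki}\in\mathbb{Z}$ not all divisible by any prime. $\mathcal{A}_p$ is the family of $n$ hyperplanes $\{(\alpha_i)_p=0\}$ in $\mathbb{F}_p^l$, where $(\alpha_i)_p$ is the reduction mod $p$. Let $C=(c_{ki})\in\mathrm{Mat}_{l\times n}(\mathbb{Z})$ with columns $c_1,\dots,c_n$, and for nonempty $J=\{i_1<\dots<i_k\}\subseteq[n]$ let $C_J=(c_{i_1},\dots,c_{i_k})$. There are unimodular $S_J\in\mathrm{Mat}_{l\times l}(\mathbb{Z})$, $T_J\in\mathrm{Mat}_{k\times k}(\mathbb{Z})$ with $S_JC_JT_J$ equal to the Smith normal form, having diagonal block $\mathrm{diag}(e_{J,1},\dots,e_{J,r})$, $e_{J,i}>0$, $e_{J,1}\mid\dots\mid e_{J,r}$, $r=\mathrm{rk}(C_J)$, and zeros elsewhere; set $e(J)=e_{J,r}$. The $\lcm$-period is $\rho_0=\lcm\{e(J): J\subseteq[n],\ 1\le|J|\le l\}$. Further $q_0=\max_{\emptyset\ne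 J\subseteq[n]}\min_{S_J}\max\{|u| : u \text{ an entry of } S_JC_J \text{ or } C_J\}$, the minimum over all such unimodular $S_J$. Two indexed families $\{H^{(1)}_i\}$ in $K_1^l$, $\{H^{(2)}_i\}$ in $K_2^l$ are combinatorially equivalent if $\dim(H^{(1)}_{i_1}\cap\dots\cap H^{(1)}_{i_k})=\dim(H^{(2)}_{i_1}\cap\dots\cap H^{(2)}_{i_k})$ for all $i_1<\dots<i_k$. *)

(* Defs.v *)
From HB Require Import structures.
From mathcomp Require Import all_boot all_order all_algebra.
From Stdlib Require Import ClassicalEpsilon.
Set Implicit Arguments. Unset Strict Implicit. Unset Printing Implicit Defensive.
Import Order.TTheory GRing.Theory Num.Theory.
Local Open Scope ring_scope.

(* The arrangement is given by the integer coefficient matrix C : 'M[int]_(l, n);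
   column i holds the coefficients c_{1i},...,c_{li} of alpha_i. *)

Definition subcols (l n : nat) (C : 'M[int]_(l, n)) (J : {set 'I_n})
  : 'M[int]_(l, #|J|) := \matrix_(i, j) C i (enum_val j).

Definition is_snf (a b : nat) (D : 'M[int]_(a, b)) (d : seq nat) : bool :=
  [&& all (fun x => 0 < x)%N d, sorted dvdn d, (size d <= minn a b)%N &
      D == \matrix_(i, j) (if (i == j :> nat) && (i < size d)%N
                           then (nth 0%N d i)%:Z else 0)].

Definition snf_of (l n : nat) (C : 'M[int]_(l, n)) (J : {set 'I_n})
  (S : 'M[int]_l) (T : 'M[int]_#|J|) (d : seq nat) : Prop :=
  S \in unitmx /\ T \in unitmx /\ is_snf (S *m subcols C J *m T) d.

Definition eJ (l n : nat) (C : 'M[int]_(l, n)) (J : {set 'I_n}) : nat :=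
  last 0%N (epsilon (inhabits [::])
    (fun d => exists S T, @snf_of l n C J S T d)).

Definition rho0 (l n : nat) (C : 'M[int]_(l, n)) : nat :=
  \big[lcmn/1%N]_(J : {set 'I_n} | (0 < #|J| <= l)%N) eJ C J.

Definition entry_bound (l n : nat) (C : 'M[int]_(l, n)) (J : {set 'I_n})
  (S : 'M[int]_l) : nat :=
  \max_(i < l) \max_(j < #|J|)
     maxn (absz ((S *m subcols C J) i j)) (absz (subcols C J i j)).

Definition min_bound (l n : nat) (C : 'M[int]_(l, n)) (J : {set 'I_n}) : nat :=
  let P := fun m : nat => exists S T d, @snf_of l n C J S T d /\
                                       entry_bound C J S = m in
  epsilon (inhabits 0%N) (fun m => P m /\ forall m', P m' -> (m <= m')%N).

Definition q0 (l n : nat) (C : 'M[int]_(l, n)) : nat :=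
  \max_(J : {set 'I_n} | J != set0) min_bound C J.

(* The hyperplane H_i = {x : alpha_i(x) = 0} over a field K, as a row space
   (x a row vector, alpha_i(x) = x *m col i A). *)
Definition hyp (K : fieldType) (l n : nat) (A : 'M[K]_(l, n)) (i : 'I_n) :=
  kermx (col i A).

Definition inter_hyps (K : fieldType) (l n : nat) (A : 'M[K]_(l, n))
  (J : {set 'I_n}) := (\bigcap_(i in J) hyp A i)%MS.

Definition comb_equiv (K1 K2 : fieldType) (l n : nat)
  (A1 : 'M[K1]_(l, n)) (A2 : 'M[K2]_(l, n)) : Prop :=
  forall J : {set 'I_n}, J != set0 ->
    \rank (inter_hyps A1 J) = \rank (inter_hyps A2 J).

Definition AQ (l n : nat) (C : 'M[int]_(l, n)) : 'M[rat]_(l, n) :=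
  map_mx (fun z : int => z%:~R) C.
Definition Ap (p l n : nat) (C : 'M[int]_(l, n)) : 'M['F_p]_(l, n) :=
  map_mx (fun z : int => z%:~R) C.

(* Main.v *)
From HB Require Import structures.
From mathcomp Require Import all_boot all_order all_algebra.
From Stdlib Require Import ClassicalEpsilon.
Require Import Defs.
Set Implicit Arguments. Unset Strict Implicit. Unset Printing Implicit Defensive.
Import Order.TTheory GRing.Theory Num.Theory.
Local Open Scope ring_scope.

Definition subc (T : Type) (l n : nat) (A : 'M[T]_(l, n)) (J : {set 'I_n})
  : 'M[T]_(l, #|J|) := \matrix_(i, j) A i (enum_val j).

Lemma subcolsE l n (C : 'M[int]_(l, n)) J : subcols C J = subc C J.
Proof. by []. Qed.

Section Field.
Variable F : fieldType.

Lemma mul_subcE l n k (A : 'M[F]_(l, n)) J (X : 'M[F]_(k, l)) r j :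
  (X *m subc A J) r j = (X *m col (enum_val j) A) r 0.
Proof. by rewrite !mxE; apply: eq_bigr => m _; rewrite !mxE. Qed.

Lemma mul_subc0 l n k (A : 'M[F]_(l, n)) J (X : 'M[F]_(k, l)) :
  X *m subc A J = 0 <-> forall i, i \in J -> X *m col i A = 0.
Proof.
split.
- move=> H i Hi; apply/matrixP => r c; rewrite (ord1 c).
  move/matrixP: H => /(_ r (enum_rank_in Hi i)).
  by rewrite mul_subcE enum_rankK_in // !mxE.
- move=> H; apply/matrixP => r j; rewrite mul_subcE H ?enum_valP // !mxE.
  done.
Qed.

Lemma inter_rank l n (A : 'M[F]_(l, n)) J :
  \rank (inter_hyps A J) = (l - \rank (subc A J))%N.
Proof.
rewrite -mxrank_ker; apply: eqmx_rank; apply/andP; split.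
- apply/sub_kermxP; apply/mul_subc0 => i Hi.
  have /sub_bigcapmxP H := submx_refl (inter_hyps A J).
  by apply/sub_kermxP; exact: H.
- apply/sub_bigcapmxP => i Hi; apply/sub_kermxP.
  by move/mul_subc0: (mulmx_ker (subc A J)); apply.
Qed.

Lemma rank_cols_le l n b (A : 'M[F]_(l, n)) (J : {set 'I_n}) (B : 'M[F]_(l, b)) :
  (forall j, exists2 i, i \in J & col j B = col i A) ->
  (\rank B <= \rank (subc A J))%N.
Proof.
move=> H; rewrite -mxrank_tr -[X in (_ <= X)%N]mxrank_tr; apply: mxrankS.
apply/row_subP => j; have [i Hi E] := H j.
rewrite -tr_col E.
have -> : col i A = col (enum_rank_in Hi i) (subc A J).
  by apply/matrixP => r c; rewrite !mxE enum_rankK_in.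
by rewrite tr_col row_sub.
Qed.

Lemma rank_subc_mono l n (A : 'M[F]_(l, n)) (J J' : {set 'I_n}) :
  J' \subset J -> (\rank (subc A J') <= \rank (subc A J))%N.
Proof.
move=> HJ; apply: rank_cols_le => j; exists (enum_val j).
  by apply: (subsetP HJ); apply: enum_valP.
by apply/matrixP => r c; rewrite !mxE.
Qed.

Definition dmx a b (v : seq F) : 'M[F]_(a, b) :=
  \matrix_(i, j) (if (i == j :> nat) && (i < size v)%N then v`_i else 0).

Lemma dmx_factor a b (v : seq F) :
  dmx a b v = pid_mx (size v) *m diag_mx (\row_(j < b) (if (j < size v)%N then v`_j else 1)).
Proof.
rewrite mul_mx_diag; apply/matrixP => i j; rewrite !mxE.
case: eqP => [E|_] /=; last by rewrite mul0r.
by rewrite E; case: ltnP; rewrite ?mul1r ?mul0r.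
Qed.

Lemma dmx_rank_le a b v : (size v <= minn a b)%N -> (\rank (dmx a b v) <= size v)%N.
Proof.
move=> Hs; rewrite dmx_factor; apply: leq_trans (mxrankM_maxl _ _) _.
rewrite rank_pid_mx //; apply: leq_trans Hs _; by rewrite ?geq_minl ?geq_minr.
Qed.

Lemma dmx_rank_eq a b v : (size v <= minn a b)%N -> all (fun x => x != 0) v ->
  \rank (dmx a b v) = size v.
Proof.
move=> Hs Hv; rewrite dmx_factor mxrankMfree.
  rewrite rank_pid_mx //; apply: leq_trans Hs _; by rewrite ?geq_minl ?geq_minr.
rewrite row_free_unit unitmxE det_diag unitfE.
apply/prodf_neq0 => j _; rewrite mxE; case: ifP => [Hj|_]; last exact: oner_neq0.
by apply: (allP Hv); apply: mem_nth.
Qed.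

Lemma rank_unitl m k (U : 'M[F]_m) (B : 'M[F]_(m, k)) :
  U \in unitmx -> \rank (U *m B) = \rank B.
Proof.
move=> HU; apply/eqP; rewrite eqn_leq mxrankM_maxr /=.
by rewrite -{1}(mulKmx HU B) mxrankM_maxr.
Qed.

Lemma map_subc l n (C : 'M[int]_(l, n)) J :
  map_mx (intr : int -> F) (subc C J) = subc (map_mx intr C) J.
Proof. by apply/matrixP => i j; rewrite !mxE. Qed.

Lemma snf_rank l n (C : 'M[int]_(l, n)) J S T d : @snf_of l n C J S T d ->
  \rank (subc (map_mx (fun z : int => z%:~R) C : 'M[F]_(l, n)) J)
  = \rank (dmx l #|J| [seq (x%:R : F) | x <- d]).
Proof.
case=> HS [HT /and4P [Hpos Hsort Hsize /eqP HD]].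
have Hu : forall k (U : 'M[int]_k), U \in unitmx -> map_mx (intr : int -> F) U \in unitmx.
  move=> k U HU; rewrite unitmxE det_map_mx; apply: rmorph_unit; by rewrite -unitmxE.
have -> : dmx l #|J| [seq (x%:R : F) | x <- d]
   = map_mx intr S *m subc (map_mx intr C) J *m map_mx intr T.
  rewrite -map_subc -!map_mxM HD; apply/matrixP => i j; rewrite /dmx !mxE size_map.
  case: ifP => // /andP [_ Hi]; by rewrite (nth_map 0%N).
rewrite mxrankMfree ?row_free_unit ?Hu // rank_unitl ?Hu //.
Qed.

End Field.

Lemma snf_exists a b (M : 'M[int]_(a, b)) :
  exists S T d, S \in unitmx /\ T \in unitmx /\ is_snf (S *m M *m T) d.
Proof.
have [L HL [R HR [d Hd HM]]] := int_Smith_normal_form M.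
set m := minn a b.
set d1 := take m d.
set r := find (fun x : int => x == 0) d1.
set d2 := take r d1.
have Hr1 : (r <= size d1)%N := find_size _ _.
have Hd1 : (size d1 <= m)%N by rewrite size_take_min geq_minl.
have Hsz2 : size d2 = r := size_takel Hr1.
have Hnz : forall i, (i < r)%N -> d`_i != 0.
  move=> i Hi; have := before_find 0 Hi; rewrite nth_take; first by move/negbT.
  exact: leq_trans Hi (leq_trans Hr1 Hd1).
have Hz : forall i, (r <= i)%N -> (i < m)%N -> d`_i = 0.
  move=> i H1 H2; case: (ltnP i (size d)) => Hid; last by rewrite nth_default.
  have Hrs : (r < size d1)%N.
    by apply: leq_ltn_trans H1 _; rewrite size_take_min leq_min H2 Hid.
  have Hhas : has (fun x : int => x == 0) d1 by rewrite has_find.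
  have := nth_find 0 Hhas; rewrite -/r nth_take; last exact: leq_trans Hrs Hd1.
  move=> /eqP Hdr.
  have Hrd : (r < size d)%N by apply: leq_ltn_trans H1 Hid.
  have Htr : transitive (dvdz : rel int).
    by move=> y x z H H'; exact: (dvdz_trans H H').
  have Hrf : reflexive (dvdz : rel int) by move=> x; exact: dvdzz.
  have := sorted_leq_nth Htr Hrf 0 Hd r i Hrd Hid H1.
  by rewrite Hdr => H; apply/eqP; rewrite -dvd0z; exact: H.
pose s := \row_(j < b) (if d`_j < 0 then -1 else 1 : int).
exists (invmx L), (invmx R *m diag_mx s), (map absz d2).
split; first by rewrite unitmx_inv.
split.
  rewrite unitmx_mul unitmx_inv HR /= unitmxE det_diag.
  apply: (big_ind (fun x : int => x \is a GRing.unit)) => //.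
  - by move=> x y Hx Hy; rewrite unitrM Hx Hy.
  - by move=> j _; rewrite mxE; case: ifP => _; rewrite ?unitrN1 ?unitr1.
have -> : invmx L *m M *m (invmx R *m diag_mx s)
    = \matrix_(i, j) (d`_i *+ (i == j :> nat)) *m diag_mx s.
  rewrite HM !mulmxA mulVmx // mul1mx -(mulmxA _ R) mulmxV // mulmx1 //.
apply/and4P; split.
- apply/allP => x /mapP [y Hy ->]; rewrite absz_gt0.
  have [i Hi <-] := (nthP 0) Hy; rewrite Hsz2 in Hi.
  rewrite nth_take // nth_take; first exact: Hnz.
  exact: leq_trans Hi (leq_trans Hr1 Hd1).
- rewrite sorted_map; apply: (sub_sorted _ (take_sorted r (take_sorted m Hd))).
  by move=> x y.
- by rewrite size_map Hsz2 (leq_trans Hr1 Hd1).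
- apply/eqP/matrixP => i j; rewrite mul_mx_diag !mxE size_map Hsz2.
  case: (eqVneq (i : nat) j) => Eij /=; last by rewrite mulr0n mul0r.
  rewrite mulr1n -Eij.
  case: (ltnP i r) => Hir /=.
    rewrite (nth_map 0) ?Hsz2 // nth_take // nth_take; last first.
      exact: leq_trans Hir (leq_trans Hr1 Hd1).
    rewrite abszE; case: ltrP => H.
      by rewrite mulrN1 ltr0_norm.
    by rewrite mulr1 ger0_norm.
  rewrite Hz ?mul0r //.
  by rewrite /m leq_min ltn_ord Eij ltn_ord.
Qed.

Lemma eJ_spec l n (C : 'M[int]_(l, n)) J :
  exists S T d, @snf_of l n C J S T d /\ eJ C J = last 0%N d.
Proof.
have [S [T [d H]]] := snf_exists (subcols C J).
pose P := fun d => exists S T, @snf_of l n C J S T d.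
have HP : exists d, P d by exists d, S, T.
have [S' [T' H']] := epsilon_spec (inhabits [::]) P HP.
by exists S', T', (epsilon (inhabits [::]) P).
Qed.

Lemma rankQ l n (C : 'M[int]_(l, n)) J S T d : @snf_of l n C J S T d ->
  \rank (subc (AQ C) J) = size d.
Proof.
move=> H; rewrite /AQ (snf_rank _ H).
case: H => _ [_ /and4P [Hpos _ Hs _]].
rewrite dmx_rank_eq ?size_map //.
apply/allP => x /mapP [y Hy ->]; rewrite pnatr_eq0 -lt0n; exact: (allP Hpos).
Qed.

Lemma rankp_le p l n (C : 'M[int]_(l, n)) J S T d : @snf_of l n C J S T d ->
  (\rank (subc (Ap p C) J) <= size d)%N.
Proof.
move=> H; rewrite /Ap (snf_rank _ H).
case: H => _ [_ /and4P [_ _ Hs _]].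
by rewrite -[size d](size_map (fun x => (x%:R : 'F_p))) dmx_rank_le ?size_map.
Qed.

Lemma rankp_eq p l n (C : 'M[int]_(l, n)) J S T d : prime p ->
  @snf_of l n C J S T d -> (forall x, x \in d -> coprime p x) ->
  \rank (subc (Ap p C) J) = size d.
Proof.
move=> Hp H Hc; rewrite /Ap (snf_rank _ H).
case: H => _ [_ /and4P [_ _ Hs _]].
rewrite dmx_rank_eq ?size_map //.
apply/allP => x /mapP [y Hy ->]; rewrite -unitfE unitFpE //; exact: Hc.
Qed.

Lemma small_eq l n (C : 'M[int]_(l, n)) p (J : {set 'I_n}) : prime p -> coprime p (rho0 C) ->
  (0 < #|J| <= l)%N ->
  \rank (subc (AQ C) J) = \rank (subc (Ap p C) J).
Proof.
move=> Hp Hc HJ.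
have [S [T [d [H He]]]] := eJ_spec C J.
have Hce : coprime p (eJ C J).
  apply: coprime_dvdr Hc; exact: (biglcmn_sup J HJ (dvdnn _)).
rewrite He in Hce.
rewrite (rankQ H) (rankp_eq Hp H) // => x Hx.
apply: coprime_dvdr Hce.
have [i Hi <-] := (nthP 0%N) Hx.
have Hsz : (0 < size d)%N by apply: leq_ltn_trans Hi.
rewrite -nth_last; apply: (sorted_leq_nth (@dvdn_trans) dvdnn) => //.
- by case: H => _ [_ /and4P [_ Hso _ _]].
- by rewrite inE prednK.
- by rewrite -ltnS prednK.
Qed.

Theorem corollary7p3 (l n : nat) (C : 'M[int]_(l, n))
  (Hprim : forall (i : 'I_n) (q : nat), prime q ->
             ~~ [forall k : 'I_l, (q%:Z %| C k i)%Z])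
  (Hdist : forall i j : 'I_n, i != j -> ~~ (hyp (AQ C) i == hyp (AQ C) j)%MS)
  (Hess : \rank (inter_hyps (AQ C) [set: 'I_n]) = 0%N)
  (p : nat) (Hp : prime p) (Hq0 : (q0 C < p)%N) (Hcop : coprime p (rho0 C)) :
  comb_equiv (AQ C) (Ap p C).
Proof.
move=> J HJ; rewrite !inter_rank; congr (_ - _)%N.
have HJ0 : (0 < #|J|)%N by rewrite card_gt0.
case: (leqP #|J| l) => Hl.
  by apply: small_eq; rewrite ?HJ0.
have [S [T [d [H _]]]] := eJ_spec C J.
apply/eqP; rewrite eqn_leq; apply/andP; split; last first.
  by rewrite (rankQ H); exact: rankp_le H.
set A := subc (AQ C) J.
case: (posnP (\rank A)) => [->|Hr] //.
pose f := maxrankfun A^T.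
pose J' := [set enum_val (f k) | k in 'I_(\rank A^T)].
have HJ'J : J' \subset J.
  by apply/subsetP => x /imsetP [k _ ->]; apply: enum_valP.
have HJ'1 : (0 < #|J'| <= l)%N.
  apply/andP; split.
    apply/card_gt0P; have Hr' : (0 < \rank A^T)%N by rewrite mxrank_tr.
    by exists (enum_val (f (Ordinal Hr'))); apply: imset_f.
  apply: leq_trans (leq_imset_card _ _) _; rewrite card_ord.
  exact: rank_leq_col.
apply: leq_trans (rank_subc_mono _ HJ'J).
rewrite -(small_eq Hp Hcop HJ'1).
rewrite -mxrank_tr -(eqmx_rank (introT eqmxP (eq_maxrowsub A^T))) -mxrank_tr.
apply: rank_cols_le => k; exists (enum_val (f k)); first exact: imset_f.
by apply/matrixP => i c; rewrite !mxE.
Qed.
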